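(* For every finitely generated group $G$ there is an exact sequence $1\to Z(RF(G))\to RF(G)\to RF_{na}(G)\to 1$, where the map $RF(G)\to RF_{na}(G)$ is the natural projection. In particular, $G$ is residually non-abelian free if and only if $G$ is residually free and $Z(G)=1$.
   Context: $\mathbb F$ denotes a non-abelian free group. $RF(G)$ is the quotient of $G$ by the intersection of the kernels of all homomorphisms $G\to\mathbb F$; $RF_{na}(G)$ is the quotient of $G$ by the intersection of the kernels of all homomorphisms $G\to\mathbb F$ with non-abelian image (so $RF_{na}(G)$ is a quotient of $RF(G)$). $G$ is residually free if $G=RF(G)$ (i.e. the natural map $G\to RF(G)$ is injective), and residually non-abelian free if $G=RF_{na}(G)$. $Z(H)$ is the center of $H$. *)

(* Defs.v *)
From Stdlib Require Import List.
Import ListNotations.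

Record Group := {
  carrier :> Type;
  gmul : carrier -> carrier -> carrier;
  gone : carrier;
  ginv : carrier -> carrier;
  gmul_assoc : forall x y z, gmul x (gmul y z) = gmul (gmul x y) z;
  gmul_1l : forall x, gmul gone x = x;
  gmul_1r : forall x, gmul x gone = x;
  gmul_Vl : forall x, gmul (ginv x) x = gone;
  gmul_Vr : forall x, gmul x (ginv x) = gone
}.

Arguments gmul {g}.
Arguments gone {g}.
Arguments ginv {g}.

Record Hom (G H : Group) := {
  hmap :> G -> H;
  hmap_mul : forall x y, hmap (gmul x y) = gmul (hmap x) (hmap y)
}.
Arguments hmap {G H}.

Inductive in_gen (G : Group) (S : list G) : G -> Prop :=
| gen_one : in_gen G S gone
| gen_elt : forall s, In s S -> in_gen G S s
| gen_inv : forall x, in_gen G S x -> in_gen G S (ginv x)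
| gen_mul : forall x y, in_gen G S x -> in_gen G S y -> in_gen G S (gmul x y).

Definition finitely_generated (G : Group) : Prop :=
  exists S : list G, forall g : G, in_gen G S g.

Definition is_free_on (F : Group) (X : Type) (i : X -> F) : Prop :=
  forall (H : Group) (f : X -> H),
    exists phi : Hom F H,
      (forall x, phi (i x) = f x) /\
      (forall psi : Hom F H, (forall x, psi (i x) = f x) -> forall y, psi y = phi y).

Definition abelian (G : Group) : Prop := forall x y : G, gmul x y = gmul y x.

Definition nonabelian_free (F : Group) : Prop :=
  (exists (X : Type) (i : X -> F), is_free_on F X i) /\ ~ abelian F.

Definition nonab_image {G F : Group} (phi : Hom G F) : Prop :=
  exists x y : G, gmul (phi x) (phi y) <> gmul (phi y) (phi x).

(* RF(G) realised concretely as the image of G in the product of copies of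
   F indexed by all homomorphisms G -> F (this image is canonically
   G / (intersection of all kernels)).  Similarly RF_na(G) is the image of G
   in the product indexed by homomorphisms with non-abelian image.        *)

Definition nonabHom (G F : Group) := { phi : Hom G F | nonab_image phi }.

Definition rf_map (G F : Group) (g : G) : Hom G F -> F := fun phi => phi g.
Definition rfna_map (G F : Group) (g : G) : nonabHom G F -> F :=
  fun p => proj1_sig p g.

Definition in_RF (G F : Group) (x : Hom G F -> F) : Prop :=
  exists g : G, x = rf_map G F g.
Definition in_RFna (G F : Group) (y : nonabHom G F -> F) : Prop :=
  exists g : G, y = rfna_map G F g.

Definition pmul {I : Type} {F : Group} (x y : I -> F) : I -> F :=
  fun i => gmul (x i) (y i).
Definition pone {I : Type} {F : Group} : I -> F := fun _ => gone.

Definition rf_proj (G F : Group) (x : Hom G F -> F) : nonabHom G F -> F :=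
  fun p => x (proj1_sig p).

Definition in_Z_RF (G F : Group) (x : Hom G F -> F) : Prop :=
  in_RF G F x /\ forall y, in_RF G F y -> pmul x y = pmul y x.

Definition residually_free (G F : Group) : Prop :=
  forall g h : G, rf_map G F g = rf_map G F h -> g = h.
Definition residually_nonab_free (G F : Group) : Prop :=
  forall g h : G, rfna_map G F g = rfna_map G F h -> g = h.

Definition trivial_center (G : Group) : Prop :=
  forall z : G, (forall g : G, gmul z g = gmul g z) -> z = gone.

(* Main.v *)
Require Import Defs.
From Stdlib Require Import List Arith Lia Classical ClassicalEpsilon FunctionalExtensionality ProofIrrelevance.
Import ListNotations.

Definition ldec {X : Type} (a b : X * bool) : {a = b} + {a <> b} :=
  excluded_middle_informative (a = b).

Definition linv {X : Type} (a : X * bool) : X * bool := (fst a, negb (snd a)).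

Lemma linv_inv {X} (a : X * bool) : linv (linv a) = a.
Proof. destruct a as [x b]; unfold linv; simpl; rewrite Bool.negb_involutive; reflexivity. Qed.

Lemma linv_neq {X} (a : X * bool) : a <> linv a.
Proof. destruct a as [x b]; unfold linv; simpl; intro H; inversion H; destruct b; discriminate. Qed.

Lemma linv_sym {X} (a b : X * bool) : a <> linv b -> b <> linv a.
Proof. intros H E; apply H; rewrite E, linv_inv; reflexivity. Qed.

Fixpoint reduced {X} (w : list (X * bool)) : Prop :=
  match w with
  | [] => True
  | a :: w' => (match w' with [] => True | b :: _ => b <> linv a end) /\ reduced w'
  end.

Definition consred {X} (a : X * bool) (w : list (X * bool)) : list (X * bool) :=
  match w with
  | [] => [a]
  | b :: w' => if ldec b (linv a) then w' else a :: w
  end.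

Definition mulw {X} (u v : list (X * bool)) := fold_right consred v u.
Definition invw {X} (u : list (X * bool)) := rev (map linv u).

Lemma reduced_tl {X} (a : X * bool) w : reduced (a :: w) -> reduced w.
Proof. simpl; tauto. Qed.

Lemma consred_reduced {X} (a : X * bool) w : reduced w -> reduced (consred a w).
Proof.
  destruct w as [|b w']; simpl; auto.
  intros [H1 H2]. destruct (ldec b (linv a)); simpl; auto.
Qed.

Lemma mulw_reduced {X} (u v : list (X * bool)) : reduced v -> reduced (mulw u v).
Proof. induction u; simpl; auto. intros; apply consred_reduced; auto. Qed.

Lemma consred_nocancel {X} (a : X * bool) w : reduced (a :: w) -> consred a w = a :: w.
Proof.
  destruct w as [|b w']; simpl; auto.
  intros [H1 H2]. destruct (ldec b (linv a)); congruence.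
Qed.

Lemma consred_cancel {X} (a : X * bool) w : reduced w -> consred a (consred (linv a) w) = w.
Proof.
  destruct w as [|b w']; simpl.
  - intros _. destruct (ldec (linv a) (linv a)); congruence.
  - intros [H1 H2]. destruct (ldec b (linv (linv a))) as [E|E].
    + rewrite linv_inv in E. subst b. destruct w' as [|c w'']; simpl; auto.
      destruct (ldec c (linv a)); congruence.
    + simpl. destruct (ldec (linv a) (linv a)); congruence.
Qed.

Lemma mulw_consred {X} (a : X * bool) u v : reduced v ->
  mulw (consred a u) v = consred a (mulw u v).
Proof.
  intros Hv. destruct u as [|b u']; simpl; auto.
  destruct (ldec b (linv a)) as [E|E]; simpl; auto.
  subst b. rewrite consred_cancel; auto. apply mulw_reduced; auto.
Qed.

Lemma mulw_assoc {X} (u w v : list (X * bool)) : reduced v ->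
  mulw (mulw u w) v = mulw u (mulw w v).
Proof.
  intros Hv; induction u; simpl; auto.
  rewrite mulw_consred; auto. rewrite IHu; auto.
Qed.

Lemma mulw_app {X} (u1 u2 v : list (X * bool)) : mulw (u1 ++ u2) v = mulw u1 (mulw u2 v).
Proof. unfold mulw; apply fold_right_app. Qed.

Lemma invw_cons {X} (a : X * bool) u : invw (a :: u) = invw u ++ [linv a].
Proof. reflexivity. Qed.

Lemma invw_snoc {X} (a : X * bool) u : invw (u ++ [a]) = linv a :: invw u.
Proof. unfold invw; rewrite map_app, rev_app_distr; reflexivity. Qed.

Lemma invw_invw {X} (u : list (X * bool)) : invw (invw u) = u.
Proof.
  unfold invw; rewrite map_rev, rev_involutive, map_map.
  erewrite map_ext; [apply map_id|]. intro; apply linv_inv.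
Qed.

Lemma mulw_invl {X} (u : list (X * bool)) : mulw (invw u) u = [].
Proof.
  induction u as [|a u IH]; simpl; auto.
  rewrite invw_cons, mulw_app. simpl.
  destruct (ldec a (linv (linv a))) as [_|E]; [exact IH|].
  exfalso; apply E; rewrite linv_inv; auto.
Qed.

Lemma mulw_invr {X} (u : list (X * bool)) : mulw u (invw u) = [].
Proof. rewrite <- (invw_invw u) at 1. apply mulw_invl. Qed.

Lemma mulw_nil_r {X} (u : list (X * bool)) : reduced u -> mulw u [] = u.
Proof.
  induction u as [|a u IH]; simpl; auto.
  intros H. rewrite IH by (destruct H; auto). apply consred_nocancel; auto.
Qed.

Lemma reduced_app {X} (u v : list (X * bool)) : reduced u -> reduced v ->
  (forall x y u' v', u = u' ++ [x] -> v = y :: v' -> y <> linv x) -> reduced (u ++ v).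
Proof.
  induction u as [|a u IH]; simpl; auto.
  intros [H1 H2] Hv Hc. split.
  - destruct u as [|b u'].
    + simpl. destruct v as [|y v']; auto. apply (Hc a y [] v'); auto.
    + simpl. exact H1.
  - apply IH; auto. intros x y u' v' E1 E2. apply (Hc x y (a :: u') v'); subst; auto.
Qed.

Lemma reduced_app_inv {X} (u v : list (X * bool)) : reduced (u ++ v) -> reduced u /\ reduced v.
Proof.
  induction u as [|a u IH]; simpl; auto.
  intros [H1 H2]. destruct (IH H2) as [A B]. split; auto. split; auto.
  destruct u; simpl in *; auto.
Qed.

Lemma mulw_app_red {X} (u v : list (X * bool)) : reduced (u ++ v) -> mulw u v = u ++ v.
Proof.
  induction u as [|a u IH]; simpl; auto.
  intros H. rewrite IH by (destruct H; auto). apply consred_nocancel; auto.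
Qed.

Lemma invw_last {X} (u u' : list (X * bool)) x : invw u = u' ++ [x] -> exists u'', u = linv x :: u''.
Proof.
  destruct u as [|h u].
  - intros H. destruct u'; discriminate.
  - rewrite invw_cons. intros H. apply app_inj_tail in H.
    destruct H as [_ H]. subst x. rewrite linv_inv. eauto.
Qed.

Lemma invw_reduced {X} (u : list (X * bool)) : reduced u -> reduced (invw u).
Proof.
  induction u as [|a u IH]; [simpl; auto|].
  intros [H1 H2]. rewrite invw_cons. apply reduced_app; simpl; auto.
  intros x y u' v' E1 E2. inversion E2; subst y.
  destruct (invw_last _ _ _ E1) as [u'' E]. subst u.
  intro F; apply H1; auto.
Qed.

Definition Wcar (X : Type) := {w : list (X * bool) | reduced w}.

Lemma Weq {X} (u v : Wcar X) : proj1_sig u = proj1_sig v -> u = v.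
Proof.
  destruct u as [u hu], v as [v hv]; simpl; intros E; subst v.
  f_equal; apply proof_irrelevance.
Qed.

Definition Wmul {X} (u v : Wcar X) : Wcar X :=
  exist _ (mulw (proj1_sig u) (proj1_sig v)) (mulw_reduced _ _ (proj2_sig v)).
Definition Wone {X} : Wcar X := exist _ [] I.
Definition Winv {X} (u : Wcar X) : Wcar X :=
  exist _ (invw (proj1_sig u)) (invw_reduced _ (proj2_sig u)).

Definition WG (X : Type) : Group.
Proof.
  refine (@Build_Group (Wcar X) Wmul Wone Winv _ _ _ _ _).
  - intros x y z; apply Weq; simpl. symmetry; apply mulw_assoc, proj2_sig.
  - intros x; apply Weq; reflexivity.
  - intros x; apply Weq; simpl. apply mulw_nil_r, proj2_sig.
  - intros x; apply Weq; simpl. apply mulw_invl.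
  - intros x; apply Weq; simpl. apply mulw_invr.
Defined.


Lemma g_cancel_l (G : Group) (x y z : G) : gmul x y = gmul x z -> y = z.
Proof.
  intros H. rewrite <- (gmul_1l G y), <- (gmul_1l G z), <- (gmul_Vl G x).
  rewrite <- !gmul_assoc, H; reflexivity.
Qed.

Lemma g_cancel_r (G : Group) (x y z : G) : gmul y x = gmul z x -> y = z.
Proof.
  intros H. rewrite <- (gmul_1r G y), <- (gmul_1r G z), <- (gmul_Vr G x).
  rewrite !gmul_assoc, H; reflexivity.
Qed.

Lemma g_inv_unique (G : Group) (x y : G) : gmul x y = gone -> y = ginv x.
Proof. intros H. apply (g_cancel_l G x). rewrite H, gmul_Vr; reflexivity. Qed.

Lemma g_inv_mul (G : Group) (x y : G) : ginv (gmul x y) = gmul (ginv y) (ginv x).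
Proof.
  symmetry; apply g_inv_unique.
  rewrite <- gmul_assoc, (gmul_assoc G y), gmul_Vr, gmul_1l, gmul_Vr; reflexivity.
Qed.

Lemma g_inv_inv (G : Group) (x : G) : ginv (ginv x) = x.
Proof. symmetry; apply g_inv_unique, gmul_Vl. Qed.

Lemma hom_one (G H : Group) (f : Hom G H) : f gone = gone.
Proof.
  apply (g_cancel_l H (f gone)). rewrite <- hmap_mul, !gmul_1l, gmul_1r; reflexivity.
Qed.

Lemma hom_inv (G H : Group) (f : Hom G H) (x : G) : f (ginv x) = ginv (f x).
Proof. apply g_inv_unique. rewrite <- hmap_mul, gmul_Vr; apply hom_one. Qed.

Definition comm {G : Group} (x y : G) := gmul x y = gmul y x.

Lemma comm_inv (G : Group) (x y : G) : comm x y -> comm x (ginv y).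
Proof.
  unfold comm; intros H. apply (g_cancel_l G y). apply (g_cancel_r G y).
  rewrite !gmul_assoc, gmul_Vr, gmul_1l, <- !gmul_assoc, gmul_Vl, gmul_1r. auto.
Qed.

Lemma comm_sym (G : Group) (x y : G) : comm x y -> comm y x.
Proof. unfold comm; auto. Qed.

Definition conj {G : Group} (u x : G) := gmul (ginv u) (gmul x u).

Lemma conj_mul (G : Group) (u x y : G) : conj u (gmul x y) = gmul (conj u x) (conj u y).
Proof.
  unfold conj. rewrite !gmul_assoc. f_equal. rewrite <- !gmul_assoc. f_equal. f_equal.
  rewrite gmul_assoc, gmul_Vr, gmul_1l; reflexivity.
Qed.

Lemma conj_inj (G : Group) (u x y : G) : conj u x = conj u y -> x = y.
Proof. unfold conj; intros H. apply g_cancel_l in H. apply g_cancel_r in H. auto. Qed.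

Lemma comm_conj (G : Group) (u x y : G) : comm x y -> comm (conj u x) (conj u y).
Proof. unfold comm; intros H. rewrite <- !conj_mul, H; reflexivity. Qed.

Lemma comm_unconj (G : Group) (u x y : G) : comm (conj u x) (conj u y) -> comm x y.
Proof. unfold comm; intros H. rewrite <- !conj_mul in H. eapply conj_inj; eauto. Qed.

Lemma conj_of (G : Group) (u c : G) : conj u (gmul u (gmul c (ginv u))) = c.
Proof.
  unfold conj. rewrite !gmul_assoc, gmul_Vl, gmul_1l, <- gmul_assoc, gmul_Vl, gmul_1r; reflexivity.
Qed.

Fixpoint pw {A : Type} (t : list A) (n : nat) : list A :=
  match n with 0 => [] | S n => t ++ pw t n end.

Lemma pw_add {A} (t : list A) m n : pw t (m + n) = pw t m ++ pw t n.
Proof. induction m; simpl; auto. rewrite IHm, app_assoc; auto. Qed.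

Lemma pw_comm_self {A} (t : list A) n : pw t n ++ t = t ++ pw t n.
Proof. induction n; simpl. rewrite app_nil_r; auto. rewrite <- app_assoc, IHn; auto. Qed.

Lemma comm_pw {A} (x y : list A) m : x ++ y = y ++ x -> pw x m ++ y = y ++ pw x m.
Proof.
  intros H; induction m; simpl. rewrite app_nil_r; auto.
  rewrite <- app_assoc, IHm, !app_assoc, H; auto.
Qed.

Lemma firstn_app_le {A} (a b : list A) n : n <= length a -> firstn n (a ++ b) = firstn n a.
Proof.
  intros H. rewrite firstn_app. replace (n - length a) with 0 by lia.
  rewrite firstn_O, app_nil_r; auto.
Qed.

Lemma prefix_of {A} (u v : list A) : u ++ v = v ++ u -> length u <= length v ->
  v = u ++ skipn (length u) v.
Proof.
  intros H Hl. rewrite <- (firstn_skipn (length u) v) at 1. f_equal.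
  assert (E := f_equal (firstn (length u)) H).
  rewrite firstn_app, Nat.sub_diag, firstn_O, app_nil_r, firstn_all in E.
  rewrite firstn_app in E. replace (length u - length v) with 0 in E by lia.
  rewrite firstn_O, app_nil_r in E. auto.
Qed.

Lemma comm_root {A} : forall n (u v : list A), length u + length v <= n ->
  u ++ v = v ++ u -> exists t m k, u = pw t m /\ v = pw t k.
Proof.
  induction n as [|n IH]; intros u v Hn H.
  - destruct u, v; simpl in *; try lia. exists [], 0, 0; auto.
  - destruct u as [|a u'].
    + exists v, 0, 1; simpl; rewrite app_nil_r; auto.
    + destruct (le_lt_dec (length (a :: u')) (length v)) as [Hl|Hl].
      * set (u := a :: u') in *.
        assert (Ev := prefix_of u v H Hl). set (w := skipn (length u) v) in *.
        assert (H2 : u ++ w = w ++ u).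
        { rewrite Ev in H. rewrite <- app_assoc in H. apply app_inv_head in H. auto. }
        assert (Lw : length v = length u + length w) by (rewrite Ev, length_app; auto).
        destruct (IH u w) as [t [m [k [E1 E2]]]]; auto.
        { simpl in *; lia. }
        exists t, m, (m + k). rewrite pw_add, <- E1, <- E2; auto.
      * destruct v as [|b v'].
        { exists (a :: u'), 1, 0; simpl; rewrite app_nil_r; auto. }
        set (v := b :: v') in *.
        assert (Ev := prefix_of v (a :: u') (eq_sym H) ltac:(lia)).
        set (w := skipn (length v) (a :: u')) in *.
        assert (H2 : v ++ w = w ++ v).
        { rewrite Ev in H. rewrite <- app_assoc in H. apply app_inv_head in H. auto. }
        assert (Lw : length (a :: u') = length v + length w) by (rewrite Ev at 1; rewrite length_app; auto).
        destruct (IH v w) as [t [m [k [E1 E2]]]]; auto.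
        { simpl in *; lia. }
        exists t, (m + k), m. rewrite pw_add, <- E1, <- E2; auto.
Qed.

Lemma pow_comm_le {A} (x y : list A) n m : length y <= length x -> 1 <= n -> 1 <= m ->
  pw x n = pw y m -> x ++ y = y ++ x.
Proof.
  intros Hl Hn Hm H.
  destruct n as [|n]; [lia|]. destruct m as [|m]; [lia|].
  assert (Hy : firstn (length y) x = y).
  { assert (E := f_equal (firstn (length y)) H). simpl in E.
    rewrite !firstn_app_le in E by lia. rewrite firstn_all in E; auto. }
  assert (H2 : pw x (S n) ++ y = y ++ pw x (S n)).
  { rewrite H. apply pw_comm_self. }
  assert (E := f_equal (firstn (length x + length y)) H2).
  simpl in E. rewrite <- app_assoc in E. rewrite firstn_app_2 in E.
  rewrite (Nat.add_comm (length x)), firstn_app_2, (firstn_app_le x (pw x n)), firstn_all in E by lia.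
  assert (Hf : firstn (length y) (pw x n ++ y) = y).
  { destruct n as [|n]; simpl.
    - rewrite firstn_all; auto.
    - rewrite <- app_assoc, firstn_app_le by lia. auto. }
  rewrite Hf in E. auto.
Qed.

Lemma pow_comm {A} (x y : list A) n m : 1 <= n -> 1 <= m ->
  pw x n = pw y m -> x ++ y = y ++ x.
Proof.
  intros Hn Hm H. destruct (le_lt_dec (length y) (length x)).
  - apply (pow_comm_le x y n m); auto.
  - symmetry; apply (pow_comm_le y x m n); auto; lia.
Qed.

Lemma mon_CT {A} (c p q : list A) : c <> [] -> p ++ c = c ++ p -> q ++ c = c ++ q ->
  p ++ q = q ++ p.
Proof.
  intros Hc H1 H2.
  destruct (comm_root _ p c (le_n _) H1) as [t [m [n [E1 E2]]]].
  destruct (comm_root _ q c (le_n _) H2) as [s [k [l [E3 E4]]]].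
  assert (1 <= n) by (destruct n; [rewrite E2 in Hc; simpl in Hc; congruence | lia]).
  assert (1 <= l) by (destruct l; [rewrite E4 in Hc; simpl in Hc; congruence | lia]).
  assert (Hts : t ++ s = s ++ t) by (eapply pow_comm; [| |rewrite <- E2, E4; reflexivity]; eauto).
  subst p q. apply comm_pw. symmetry. apply comm_pw. auto.
Qed.

Definition noc {X} (u v : list (X * bool)) :=
  forall x y u' v', u = u' ++ [x] -> v = y :: v' -> y <> linv x.

Lemma mulw_noc {X} (u v : list (X * bool)) : reduced u -> reduced v -> noc u v -> mulw u v = u ++ v.
Proof. intros; apply mulw_app_red, reduced_app; auto. Qed.

Lemma consred_len {X} (a : X * bool) w : length (consred a w) <= S (length w).
Proof. destruct w; simpl; auto. destruct (ldec p (linv a)); simpl; lia. Qed.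

Lemma mulw_len {X} (u v : list (X * bool)) : length (mulw u v) <= length u + length v.
Proof. induction u; simpl; auto. pose proof (consred_len a (mulw u v)). lia. Qed.

Lemma mulw_cancel {X} (u' v' : list (X * bool)) x : mulw (u' ++ [x]) (linv x :: v') = mulw u' v'.
Proof. rewrite mulw_app. simpl. destruct (ldec (linv x) (linv x)); congruence. Qed.

Lemma dichot {X} (u v : list (X * bool)) : noc u v \/ exists u' x v', u = u' ++ [x] /\ v = linv x :: v'.
Proof.
  destruct (classic (exists u' x v', u = u' ++ [x] /\ v = linv x :: v')) as [H|H]; auto.
  left. intros x y u' v' E1 E2 E3. apply H. exists u', x, v'. subst; auto.
Qed.

Definition cycred {X} (c : list (X * bool)) :=
  exists a b c1 c2, c = a :: c1 /\ c = c2 ++ [b] /\ b <> linv a.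

Definition val {X} (u : WG X) : list (X * bool) := proj1_sig (u : Wcar X).

Lemma val_mul {X} (u v : WG X) : val (gmul u v) = mulw (val u) (val v).
Proof. reflexivity. Qed.
Lemma val_inv {X} (u : WG X) : val (ginv u) = invw (val u).
Proof. reflexivity. Qed.
Lemma val_red {X} (u : WG X) : reduced (val u).
Proof. exact (proj2_sig (u : Wcar X)). Qed.
Lemma val_eq {X} (u v : WG X) : val u = val v -> u = v.
Proof. apply Weq. Qed.

Lemma keyK {X} (C A : WG X) : cycred (val C) -> comm C A ->
  exists A2, (A2 = A \/ A2 = ginv A) /\ val A2 ++ val C = val C ++ val A2.
Proof.
  intros [a1 [b [c1 [c2 [Ec1 [Ec2 Hb]]]]]] HC.
  assert (HCv := f_equal val HC). rewrite !val_mul in HCv.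
  pose proof (val_red C) as RC. pose proof (val_red A) as RA.
  destruct (dichot (val C) (val A)) as [N1|[u' [x [v' [E1 E2]]]]];
  destruct (dichot (val A) (val C)) as [N2|[u'' [y [v'' [E3 E4]]]]].
  - exists A; split; auto. rewrite <- !mulw_noc; auto.
  - exfalso. rewrite (mulw_noc _ _ RC RA N1) in HCv. rewrite E3, E4, mulw_cancel in HCv.
    pose proof (mulw_len u'' v''). apply (f_equal (@length _)) in HCv.
    rewrite length_app, length_app in HCv. simpl in HCv. lia.
  - exfalso. rewrite (mulw_noc _ _ RA RC N2) in HCv. rewrite E1, E2, mulw_cancel in HCv.
    pose proof (mulw_len u' v'). apply (f_equal (@length _)) in HCv.
    rewrite length_app, length_app in HCv. simpl in HCv. lia.
  - exists (ginv A); split; auto.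
    assert (Hx : x = b). { rewrite E1 in Ec2. apply app_inj_tail in Ec2. tauto. }
    assert (Hy : linv y = a1). { rewrite E4 in Ec1. congruence. }
    assert (I1 : val (ginv A) = a1 :: invw u'').
    { rewrite val_inv, E3, invw_snoc, Hy; auto. }
    assert (I2 : val (ginv A) = invw v' ++ [b]).
    { rewrite val_inv, E2, invw_cons, linv_inv, Hx; auto. }
    assert (Hab : a1 <> linv b) by (apply linv_sym; auto).
    assert (HC2 := comm_inv _ _ _ HC). apply (f_equal val) in HC2. rewrite !val_mul in HC2.
    assert (N3 : noc (val (ginv A)) (val C)).
    { intros x0 y0 u0 v0 F1 F2. rewrite I2 in F1. rewrite Ec1 in F2.
      apply app_inj_tail in F1. inversion F2. destruct F1; subst; auto. }
    assert (N4 : noc (val C) (val (ginv A))).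
    { intros x0 y0 u0 v0 F1 F2. rewrite Ec2 in F1. rewrite I1 in F2.
      apply app_inj_tail in F1. inversion F2. destruct F1; subst; auto. }
    rewrite <- (mulw_noc _ _ (val_red _) (val_red _) N3), <- (mulw_noc _ _ (val_red _) (val_red _) N4).
    rewrite <- !val_mul. rewrite <- !val_mul in HC2. auto.
Qed.

Lemma last_of {X} (l c c2 : list (X * bool)) b : l <> [] -> l ++ c = c ++ l -> c = c2 ++ [b] ->
  exists l', l = l' ++ [b].
Proof.
  intros Hl H Ec. destruct (exists_last Hl) as [l0 [y El]]. subst l c.
  rewrite !app_assoc in H. apply app_inj_tail in H. destruct H; subst; eauto.
Qed.

Lemma keyK2 {X} (C P Q : WG X) : cycred (val C) -> val P ++ val C = val C ++ val P ->
  val Q ++ val C = val C ++ val Q -> comm P Q.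
Proof.
  intros [a1 [b [c1 [c2 [Ec1 [Ec2 Hb]]]]]] HP HQ.
  assert (Hc : val C <> []) by (rewrite Ec1; discriminate).
  assert (M := mon_CT _ _ _ Hc HP HQ).
  apply val_eq. rewrite !val_mul.
  assert (Hn : forall p q : WG X, val p ++ val C = val C ++ val p ->
            val q ++ val C = val C ++ val q -> noc (val p) (val q)).
  { intros p q Hp Hq x y u' v' F1 F2.
    assert (Lp : val p <> []) by (rewrite F1; destruct u'; discriminate).
    destruct (last_of _ _ _ _ Lp Hp Ec2) as [l' El]. rewrite F1 in El.
    apply app_inj_tail in El. destruct El as [_ ->].
    rewrite F2, Ec1 in Hq. simpl in Hq. inversion Hq; subst.
    apply linv_sym in Hb. auto. }
  rewrite (mulw_noc _ _ (val_red P) (val_red Q)) by (apply Hn; auto).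
  rewrite (mulw_noc _ _ (val_red Q) (val_red P)) by (apply Hn; auto).
  auto.
Qed.

Lemma g_triv_conj (G : Group) (z : G) : z = gmul gone (gmul z (ginv gone)).
Proof.
  assert (E : ginv (@gone G) = gone) by (symmetry; apply g_inv_unique, gmul_1l).
  rewrite E, gmul_1l, gmul_1r; auto.
Qed.

Lemma g_conj_conj (G : Group) (l u c : G) :
  gmul l (gmul (gmul u (gmul c (ginv u))) (ginv l)) = gmul (gmul l u) (gmul c (ginv (gmul l u))).
Proof.
  rewrite g_inv_mul. rewrite !gmul_assoc. reflexivity.
Qed.

Definition Wsing {X} (a : X * bool) : WG X := exist _ [a] (Logic.conj I I).

Lemma decomp {X} : forall n (Z : WG X), length (val Z) <= n -> val Z <> [] ->
  exists U C, cycred (val C) /\ Z = gmul U (gmul C (ginv U)).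
Proof.
  induction n as [|n IH]; intros Z Hl Hn.
  { destruct (val Z); simpl in Hl; [congruence | lia]. }
  pose proof (val_red Z) as RZ.
  destruct (val Z) as [|a z1] eqn:Ez; [congruence|].
  destruct z1 as [|c z1'].
  { exists gone, Z. split; [|apply g_triv_conj].
    rewrite Ez. exists a, a, [], []. repeat split; auto. apply linv_neq. }
  set (z1 := c :: z1') in *.
  assert (Hz1 : z1 <> []) by discriminate.
  destruct (exists_last Hz1) as [m [b Em]].
  destruct (ldec b (linv a)) as [Eb|Eb].
  2:{ exists gone, Z. split; [|apply g_triv_conj].
      rewrite Ez. exists a, b, z1, (a :: m). repeat split; auto. rewrite Em; auto. }
  subst b. rewrite Em in Ez, RZ, Hl.
  assert (Rm : reduced m).
  { destruct RZ as [_ R2]. apply reduced_app_inv in R2. tauto. }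
  assert (Hm : m <> []).
  { intro E; subst m. simpl in RZ. destruct RZ as [F _]. apply F; auto. }
  set (M := (exist _ m Rm : Wcar X) : WG X).
  destruct (IH M) as [U' [C [HC EM]]]; auto.
  { simpl. simpl in Hl. rewrite length_app in Hl. simpl in Hl. lia. }
  exists (gmul (Wsing a) U'), C. split; auto.
  rewrite <- g_conj_conj, <- EM.
  apply val_eq. rewrite Ez, !val_mul, val_inv. simpl val at 2 3.
  unfold invw; simpl. rewrite mulw_app_red.
  - symmetry; apply consred_nocancel; exact RZ.
  - destruct RZ as [_ R2]; exact R2.
Qed.

Lemma CT_W {X} (Z A B : WG X) : val Z <> [] -> comm Z A -> comm Z B -> comm A B.
Proof.
  intros Hz HA HB.
  destruct (decomp _ Z (le_n _) Hz) as [U [C [HC EZ]]].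
  assert (EC : conj U Z = C) by (rewrite EZ; apply conj_of).
  assert (HA' := comm_conj _ U _ _ HA). assert (HB' := comm_conj _ U _ _ HB).
  rewrite EC in HA', HB'.
  destruct (keyK _ _ HC HA') as [A2 [OA LA]].
  destruct (keyK _ _ HC HB') as [B2 [OB LB]].
  assert (H2 := keyK2 _ _ _ HC LA LB).
  apply (comm_unconj _ U).
  assert (H3 : comm A2 (conj U B)).
  { destruct OB as [-> | ->]; auto. rewrite <- (g_inv_inv _ (conj U B)). apply comm_inv; auto. }
  destruct OA as [-> | ->]; auto.
  apply comm_sym. rewrite <- (g_inv_inv _ (conj U A)). apply comm_inv. apply comm_sym; auto.
Qed.

Fixpoint ev {F : Group} {X} (i : X -> F) (w : list (X * bool)) : F :=
  match w with
  | [] => gone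
  | a :: w' => gmul (if snd a then i (fst a) else ginv (i (fst a))) (ev i w')
  end.

Lemma ev_consred {F : Group} {X} (i : X -> F) a w :
  ev i (consred a w) = gmul (if snd a then i (fst a) else ginv (i (fst a))) (ev i w).
Proof.
  destruct w as [|b w']; simpl; auto.
  destruct (ldec b (linv a)) as [E|E]; simpl; auto.
  subst b. destruct a as [x [|]]; simpl; rewrite gmul_assoc;
    [rewrite gmul_Vr | rewrite gmul_Vl]; rewrite gmul_1l; auto.
Qed.

Lemma ev_mulw {F : Group} {X} (i : X -> F) u v : ev i (mulw u v) = gmul (ev i u) (ev i v).
Proof.
  induction u as [|a u IH]; simpl. rewrite gmul_1l; auto.
  rewrite ev_consred, IH, gmul_assoc; auto.
Qed.

Definition evHom {F : Group} {X} (i : X -> F) : Hom (WG X) F.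
Proof.
  refine (@Build_Hom (WG X) F (fun w => ev i (val w)) _).
  intros x y. rewrite val_mul. apply ev_mulw.
Defined.

Definition idHom (F : Group) : Hom F F.
Proof. refine (@Build_Hom F F (fun x => x) _). auto. Defined.

Definition compHom {A B C : Group} (g : Hom B C) (f : Hom A B) : Hom A C.
Proof. refine (@Build_Hom A C (fun x => g (f x)) _). intros; rewrite !hmap_mul; auto. Defined.

Lemma free_CT (F : Group) (X : Type) (i : X -> F) : is_free_on F X i ->
  forall z a b : F, comm z a -> comm z b -> ~ comm a b -> z = gone.
Proof.
  intros Hf z a b Ha Hb Hab.
  destruct (Hf (WG X) (fun x => Wsing (x, true))) as [phi [Hphi _]].
  destruct (Hf F i) as [phi0 [_ Hu]].
  assert (Hinj : forall y, evHom i (phi y) = y).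
  { intros y. transitivity (phi0 y).
    - apply (Hu (compHom (evHom i) phi)). intros x. simpl. rewrite Hphi. simpl. apply gmul_1r.
    - symmetry; apply (Hu (idHom F)). reflexivity. }
  apply NNPP; intro Hz. apply Hab.
  assert (Hz' : val (phi z) <> []).
  { intro E. apply Hz. rewrite <- (Hinj z). simpl. rewrite E. reflexivity. }
  assert (C := CT_W (phi z) (phi a) (phi b) Hz').
  unfold comm in *. rewrite <- (Hinj (gmul a b)), <- (Hinj (gmul b a)).
  f_equal. rewrite !hmap_mul. apply C; rewrite <- !hmap_mul; f_equal; auto.
Qed.

Lemma abelian_hom {G F : Group} (phi : Hom G F) : ~ nonab_image phi ->
  forall x y, gmul (phi x) (phi y) = gmul (phi y) (phi x).
Proof. intros H x y. apply NNPP; intro E. apply H. exists x, y; auto. Qed.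

Theorem mainTheorem4 (F : Group) (hF : nonabelian_free F)
    (G : Group) (hG : finitely_generated G) :
  (* exactness of 1 -> Z(RF(G)) -> RF(G) -> RF_na(G) -> 1 *)
  ((forall y, in_RFna G F y -> exists x, in_RF G F x /\ rf_proj G F x = y) /\
   (forall x, in_RF G F x -> (rf_proj G F x = pone <-> in_Z_RF G F x))) /\
  (residually_nonab_free G F <-> residually_free G F /\ trivial_center G).
Proof.
  destruct hF as [[X [i Hf]] _].
  assert (Key : forall (phi : Hom G F) (g : G), nonab_image phi ->
            (forall h, gmul (phi g) (phi h) = gmul (phi h) (phi g)) -> phi g = gone).
  { intros phi g [x0 [y0 Hn]] Hc. apply (free_CT F X i Hf (phi g) (phi x0) (phi y0)); unfold comm; auto. }
  split; [split|].
  - intros y [g ->]. exists (rf_map G F g). split; [exists g; auto | reflexivity].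
  - intros x [g ->]. split.
    + intros Hp. split; [exists g; auto|]. intros y [h ->].
      apply functional_extensionality; intro phi. unfold pmul, rf_map.
      destruct (classic (nonab_image phi)) as [Hn|Hn].
      * assert (E := equal_f Hp (exist _ phi Hn)). unfold rf_proj, rf_map, pone in E; simpl in E.
        rewrite E, gmul_1l, gmul_1r; auto.
      * apply abelian_hom; auto.
    + intros [_ Hz]. apply functional_extensionality; intros [phi Hn].
      unfold rf_proj, rf_map, pone; simpl. apply Key; auto.
      intros h. assert (E := equal_f (Hz (rf_map G F h) (ex_intro _ h eq_refl)) phi).
      exact E.
  - split.
    + intros Hr. split.
      * intros g h E. apply Hr. apply functional_extensionality; intros [phi Hn].
        exact (equal_f E phi).
      * intros z Hz. apply Hr. apply functional_extensionality; intros [phi Hn].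
        unfold rfna_map; simpl. rewrite hom_one. apply Key; auto.
        intros h. rewrite <- !hmap_mul, Hz; auto.
    + intros [Hr Ht] g h E.
      set (d := gmul g (ginv h)).
      assert (Hd : d = gone).
      { apply Ht. intros k. apply Hr. apply functional_extensionality; intro phi.
        unfold rf_map. rewrite !hmap_mul.
        destruct (classic (nonab_image phi)) as [Hn|Hn].
        - assert (E1 := equal_f E (exist _ phi Hn)). unfold rfna_map in E1; simpl in E1.
          unfold d. rewrite hmap_mul, hom_inv, E1, gmul_Vr, gmul_1l, gmul_1r; auto.
        - apply abelian_hom; auto. }
      unfold d in Hd. apply (g_cancel_r G (ginv h)). rewrite Hd, gmul_Vr; auto.
Qed.
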